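(* For all host types and all $s,s_1,s_2,s_3$ of the appropriate $\mathsf{sf}$ types, host functions $f,g$ and values $c,d$, the following hold up to bisimilarity $\sim$ (writing $s_1\ggg s_2$ for $\mathit{comp}\,s_1\,s_2$): (1) $\mathit{arr}\,\mathrm{id}\ggg s\sim s$; (2) $s\ggg\mathit{arr}\,\mathrm{id}\sim s$; (3) $(s_1\ggg s_2)\ggg s_3\sim s_1\ggg(s_2\ggg s_3)$; (4) $\mathit{arr}(g\circ f)\sim\mathit{arr}\,f\ggg\mathit{arr}\,g$; (5) $\mathit{first}\,s\ggg\mathit{arr}\,\pi_1\sim\mathit{arr}\,\pi_1\ggg s$; (6) $\mathit{first}\,s\ggg\mathit{arr}(\mathrm{id}\times f)\sim\mathit{arr}(\mathrm{id}\times f)\ggg\mathit{first}\,s$; (7) $\mathit{first}(\mathit{first}\,s)\ggg\mathit{arr}\,\mathit{assoc}\sim\mathit{arr}\,\mathit{assoc}\ggg\mathit{first}\,s$; (8) $\mathit{first}(\mathit{arr}\,f)\sim\mathit{arr}(f\times\mathrm{id})$; (9) $\mathit{first}(s_1\ggg s_2)\sim\mathit{first}\,s_1\ggg\mathit{first}\,s_2$; (10) $\mathit{loop}\,c\,(\mathit{first}\,s_1\ggg s_2)\sim s_1\ggg\mathit{loop}\,c\,s_2$; (11) $\mathit{loop}\,c\,(s_1\ggg\mathit{first}\,s_2)\sim\mathit{loop}\,c\,s_1\ggg s_2$; (12) $\mathit{loop}\,c\,(\mathit{loop}\,d\,s)\sim\mathit{loop}\,(c,d)\,(\mathit{arr}\,\mathit{unassoc}\ggg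 s\ggg\mathit{arr}\,\mathit{assoc})$. That is, $\mathit{arr},\mathit{comp},\mathit{first},\mathit{loop}$ form an arrow with loops (up to $\sim$).
   Context: Host language: types are sets, functions total, with binary products $A\times B$, projections $\pi_1,\pi_2$, and $f\times g=\lambda(x,y).(f x,g y)$, $\mathit{assoc}=\lambda((x,y),z).(x,(y,z))$, $\mathit{unassoc}=\lambda(x,(y,z)).((x,y),z)$. For types $A,B$, $\mathsf{sf}\,A\,B$ is the final-coalgebra (coinductive) type with $\mathsf{sf}\,A\,B\cong A\to(B\times\mathsf{sf}\,A\,B)$. Corecursive definitions: $\mathit{arr}\,f=\lambda x.(f\,x,\mathit{arr}\,f)$ for $f:A\to B$; $\mathit{comp}\,s_1\,s_2=\lambda a.(c,\mathit{comp}\,s_1'\,s_2')$ where $(b,s_1')=s_1\,a$ and $(c,s_2')=s_2\,b$; $\mathit{first}\,s=\lambda(x,z).((y,z),\mathit{first}\,s')$ where $(y,s')=s\,x$ (so $\mathit{first}:\mathsf{sf}\,A\,B\to\mathsf{sf}(A\times C)(B\times C)$); $\mathit{loop}\,v\,s=\lambda x.(y,\mathit{loop}\,v'\,s')$ where $((y,v'),s')=s\,(x,v)$, for $v:C$ and $s:\mathsf{sf}(A\times C)(B\times C)$, giving $\mathsf{sf}\,A\,B$. A relation $R$ on $\mathsf{sf}\,A\,B$ is a bisimulation if whenever $R\,s_1\,s_2$ and $s_1\,a=(b,s_1')$, then $s_2\,a=(b,s_2')$ for some $s_2'$ with $R\,s_1'\,s_2'$; bisimilarity $\sim$ is the largest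 bisimulation. *)

(* Defs.v *)
Set Implicit Arguments.

CoInductive sf (A B : Type) : Type := SF : (A -> B * sf A B) -> sf A B.
Arguments SF {A B} _.

Definition run {A B : Type} (s : sf A B) : A -> B * sf A B :=
  match s with SF f => f end.

Definition pi1 {X Y : Type} (p : X * Y) : X := fst p.
Definition pi2 {X Y : Type} (p : X * Y) : Y := snd p.
Definition prodmap {X Y X' Y' : Type} (f : X -> X') (g : Y -> Y') (p : X * Y) : X' * Y' :=
  (f (fst p), g (snd p)).
Definition assoc {X Y Z : Type} (p : (X * Y) * Z) : X * (Y * Z) :=
  let '((x, y), z) := p in (x, (y, z)).
Definition unassoc {X Y Z : Type} (p : X * (Y * Z)) : (X * Y) * Z :=
  let '(x, (y, z)) := p in ((x, y), z).

CoFixpoint arr {A B : Type} (f : A -> B) : sf A B :=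
  SF (fun x => (f x, arr f)).

CoFixpoint comp {A B C : Type} (s1 : sf A B) (s2 : sf B C) : sf A C :=
  SF (fun a => let '(b, s1') := run s1 a in
               let '(c, s2') := run s2 b in
               (c, comp s1' s2')).

CoFixpoint first {A B C : Type} (s : sf A B) : sf (A * C) (B * C) :=
  SF (fun p => let '(x, z) := p in
               let '(y, s') := run s x in
               ((y, z), first s')).

CoFixpoint loop {A B C : Type} (v : C) (s : sf (A * C) (B * C)) : sf A B :=
  SF (fun x => let '((y, v'), s') := run s (x, v) in
               (y, loop v' s')).

Definition is_bisimulation {A B : Type} (R : sf A B -> sf A B -> Prop) : Prop :=
  forall s1 s2, R s1 s2 -> forall a b s1',
    run s1 a = (b, s1') -> exists s2', run s2 a = (b, s2') /\ R s1' s2'.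

Definition bisim {A B : Type} (s1 s2 : sf A B) : Prop :=
  exists R : sf A B -> sf A B -> Prop, is_bisimulation R /\ R s1 s2.

Notation "s1 ~~ s2" := (bisim s1 s2) (at level 70).
Notation "s1 >>> s2" := (comp s1 s2) (at level 40, left associativity).

(* Main.v *)
Require Import Defs.

Ltac crush :=
  repeat (match goal with
  | p : _ * _ |- _ => destruct p
  | H : context [run ?s _] |- _ => is_var s; destruct s
  | H : context [match ?s with SF _ => _ end] |- _ => is_var s; destruct s
  | H : context [?f ?x] |- _ => is_var f;
      match type of H with ?f x = _ => fail 1 | _ =>
      match type of (f x) with (_ * sf _ _)%type => destruct (f x) eqn:? end end
  end; cbn in * ).

Ltac bis R := exists R; split;
  [ intros ? ? HR ? ? ? Hrun; repeat match type of HR with ex _ => destruct HR as [? HR] end; destruct HR as [-> ->];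
    cbn in *; crush; inversion Hrun; subst; eexists; split;
    [ reflexivity | repeat eexists ]
  | repeat eexists ].

Lemma l1 (A B : Type) (s : sf A B) : arr (fun x : A => x) >>> s ~~ s.
Proof. bis (fun u v => exists s : sf A B, u = arr (fun x : A => x) >>> s /\ v = s). Qed.

Lemma l2 (A B : Type) (s : sf A B) : s >>> arr (fun x : B => x) ~~ s.
Proof. bis (fun u v => exists s : sf A B, u = s >>> arr (fun x : B => x) /\ v = s). Qed.

Lemma l3 (A B C D : Type) (s1 : sf A B) (s2 : sf B C) (s3 : sf C D) :
  (s1 >>> s2) >>> s3 ~~ s1 >>> (s2 >>> s3).
Proof. bis (fun u v => exists (s1 : sf A B) (s2 : sf B C) (s3 : sf C D),
  u = (s1 >>> s2) >>> s3 /\ v = s1 >>> (s2 >>> s3)). Qed.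

Lemma l4 (A B C : Type) (f : A -> B) (g : B -> C) :
  arr (fun x => g (f x)) ~~ arr f >>> arr g.
Proof. bis (fun u v => u = arr (fun x => g (f x)) /\ v = arr f >>> arr g). Qed.

Lemma l5 (A B C : Type) (s : sf A B) : @first A B C s >>> arr pi1 ~~ arr pi1 >>> s.
Proof. bis (fun u v => exists s : sf A B, u = @first A B C s >>> arr pi1 /\ v = arr (@pi1 A C) >>> s). Qed.

Lemma l6 (A B C D : Type) (s : sf A B) (f : C -> D) :
  first s >>> arr (prodmap (fun x : B => x) f) ~~ arr (prodmap (fun x : A => x) f) >>> first s.
Proof. bis (fun u v => exists s : sf A B, u = first s >>> arr (prodmap (fun x : B => x) f)
  /\ v = arr (prodmap (fun x : A => x) f) >>> first s). Qed.

Lemma l7 (A B C D : Type) (s : sf A B) :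
  @first _ _ D (@first _ _ C s) >>> arr assoc ~~ arr assoc >>> first s.
Proof. bis (fun u v => exists s : sf A B, u = @first _ _ D (@first _ _ C s) >>> arr assoc
  /\ v = arr (@assoc A C D) >>> first s). Qed.

Lemma l8 (A B C : Type) (f : A -> B) :
  @first A B C (arr f) ~~ arr (prodmap f (fun x : C => x)).
Proof. bis (fun u v => u = @first A B C (arr f) /\ v = arr (prodmap f (fun x : C => x))). Qed.

Lemma l9 (A B C D : Type) (s1 : sf A B) (s2 : sf B C) :
  @first _ _ D (s1 >>> s2) ~~ first s1 >>> first s2.
Proof. bis (fun u v => exists (s1 : sf A B) (s2 : sf B C),
  u = @first _ _ D (s1 >>> s2) /\ v = @first _ _ D s1 >>> @first _ _ D s2). Qed.

Lemma l10 (A B C D : Type) (c : C) (s1 : sf A B) (s2 : sf (B * C) (D * C)) :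
  loop c (first s1 >>> s2) ~~ s1 >>> loop c s2.
Proof. bis (fun u v => exists (c : C) (s1 : sf A B) (s2 : sf (B * C) (D * C)),
  u = loop c (first s1 >>> s2) /\ v = s1 >>> loop c s2). Qed.

Lemma l11 (A B C D : Type) (c : C) (s1 : sf (A * C) (B * C)) (s2 : sf B D) :
  loop c (s1 >>> first s2) ~~ loop c s1 >>> s2.
Proof. bis (fun u v => exists (c : C) (s1 : sf (A * C) (B * C)) (s2 : sf B D),
  u = loop c (s1 >>> first s2) /\ v = loop c s1 >>> s2). Qed.

Lemma l12 (A B C D : Type) (c : C) (d : D) (s : sf ((A * C) * D) ((B * C) * D)) :
  loop c (loop d s) ~~ loop (c, d) ((arr unassoc >>> s) >>> arr assoc).
Proof. bis (fun u v => exists (c : C) (d : D) (s : sf ((A * C) * D) ((B * C) * D)),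
  u = loop c (loop d s) /\ v = loop (c, d) ((arr unassoc >>> s) >>> arr assoc)). Qed.

Theorem theorem1 :
  (* (1) *) (forall (A B : Type) (s : sf A B), arr (fun x : A => x) >>> s ~~ s) /\
  (* (2) *) (forall (A B : Type) (s : sf A B), s >>> arr (fun x : B => x) ~~ s) /\
  (* (3) *) (forall (A B C D : Type) (s1 : sf A B) (s2 : sf B C) (s3 : sf C D),
               (s1 >>> s2) >>> s3 ~~ s1 >>> (s2 >>> s3)) /\
  (* (4) *) (forall (A B C : Type) (f : A -> B) (g : B -> C),
               arr (fun x => g (f x)) ~~ arr f >>> arr g) /\
  (* (5) *) (forall (A B C : Type) (s : sf A B),
               @first A B C s >>> arr pi1 ~~ arr pi1 >>> s) /\
  (* (6) *) (forall (A B C D : Type) (s : sf A B) (f : C -> D),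
               first s >>> arr (prodmap (fun x : B => x) f)
               ~~ arr (prodmap (fun x : A => x) f) >>> first s) /\
  (* (7) *) (forall (A B C D : Type) (s : sf A B),
               @first _ _ D (@first _ _ C s) >>> arr assoc ~~ arr assoc >>> first s) /\
  (* (8) *) (forall (A B C : Type) (f : A -> B),
               @first A B C (arr f) ~~ arr (prodmap f (fun x : C => x))) /\
  (* (9) *) (forall (A B C D : Type) (s1 : sf A B) (s2 : sf B C),
               @first _ _ D (s1 >>> s2) ~~ first s1 >>> first s2) /\
  (* (10) *) (forall (A B C D : Type) (c : C) (s1 : sf A B) (s2 : sf (B * C) (D * C)),
               loop c (first s1 >>> s2) ~~ s1 >>> loop c s2) /\
  (* (11) *) (forall (A B C D : Type) (c : C) (s1 : sf (A * C) (B * C)) (s2 : sf B D),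
               loop c (s1 >>> first s2) ~~ loop c s1 >>> s2) /\
  (* (12) *) (forall (A B C D : Type) (c : C) (d : D) (s : sf ((A * C) * D) ((B * C) * D)),
               loop c (loop d s) ~~ loop (c, d) ((arr unassoc >>> s) >>> arr assoc)).
Proof.
  split; [exact l1|]. split; [exact l2|]. split; [exact l3|]. split; [exact l4|].
  split; [exact l5|]. split; [exact l6|]. split; [exact l7|]. split; [exact l8|].
  split; [exact l9|]. split; [exact l10|]. split; [exact l11|]. exact l12.
Qed.
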